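(* Let $l$ be a positive integer, let $G$ be an arbitrary graph and let $H$ be an $l$-degenerate graph. Then $AT(G+_S H)\le 3$ if $l\in\{1,2\}$, and $AT(G+_S H)\le l+1$ if $l\ge 3$.
   Context: A graph is $k$-degenerate if its vertices can be successively deleted so that each deleted vertex has degree at most $k$ at the time of deletion. For an orientation $D$, a subdigraph is Eulerian if every vertex has equal in- and outdegree in it; $D$ is an AT-orientation if the numbers of Eulerian subgraphs with an even and with an odd number of arcs differ; $AT(G)$ is the smallest $k$ such that $G$ has an AT-orientation of maximum outdegree at most $k-1$. $S(G)$ is obtained from $G$ by subdividing each edge once, with vertex set identified with $V(G)\cup E(G)$. $G+_S H$ has vertex set $(V(G)\cup E(G))\times V(H)$, with $(u_1,u_2)\sim(v_1,v_2)$ iff [$u_1=v_1\in V(G)$ and $u_2v_2\in E(H)$] or [$u_2=v_2$ and $u_1v_1\in E(S(G))$]. *)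

(* Defs.v *)
From mathcomp Require Import all_boot.
Set Implicit Arguments. Unset Strict Implicit. Unset Printing Implicit Defensive.

Section Graphs.
Variable V : finType.

Definition simple_graph (e : rel V) : bool :=
  [forall x, ~~ e x x] && [forall x, forall y, e x y == e y x].

(* k-degenerate: the vertices can be listed s_0, s_1, ... (each exactly once)
   so that deleting them in this order, s_i has at most k neighbours among
   the not yet deleted vertices s_(i+1), s_(i+2), ... *)
Definition degenerate (e : rel V) (k : nat) : Prop :=
  exists s : seq V, perm_eq s (enum V) /\
    forall (x0 : V) i, i < size s -> count (e (nth x0 s i)) (drop i.+1 s) <= k.

Definition is_orientation (e : rel V) (D : {set V * V}) : bool :=
  [forall x, forall y, ((x, y) \in D) ==> e x y] &&
  [forall x, forall y, e x y ==> (((x, y) \in D) (+) ((y, x) \in D))].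

Definition eulerian_sub (D S : {set V * V}) : bool :=
  (S \subset D) &&
  [forall v, #|[set a in S | a.1 == v]| == #|[set a in S | a.2 == v]|].

Definition n_even_eulerian (D : {set V * V}) : nat :=
  #|[set S : {set V * V} | eulerian_sub D S & ~~ odd #|S|]|.
Definition n_odd_eulerian (D : {set V * V}) : nat :=
  #|[set S : {set V * V} | eulerian_sub D S & odd #|S|]|.

Definition AT_orientation (e : rel V) (D : {set V * V}) : bool :=
  is_orientation e D && (n_even_eulerian D != n_odd_eulerian D).

Definition outdeg (D : {set V * V}) (v : V) : nat := #|[set y | (v, y) \in D]|.

Definition has_AT_orientation_lt (e : rel V) (k : nat) : bool :=
  [exists D : {set V * V}, AT_orientation e D && [forall v, outdeg D v < k]].

(* AT(G): the smallest such k.  Such k always exists (an acyclic orientation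
   works with k = #|V|), so searching in [0, #|V|+1] finds the minimum. *)
Definition AT (e : rel V) : nat :=
  find (has_AT_orientation_lt e) (iota 0 (#|V|.+2)).

Definition is_edge (e : rel V) (A : {set V}) : bool :=
  [exists x, exists y, e x y && (A == [set x; y])].

Definition Edge (e : rel V) : finType := {A : {set V} | is_edge e A}.

(* vertex set of the subdivision S(G): V(G) + E(G) *)
Definition SV (e : rel V) : finType := (V + Edge e)%type.

Definition sadj (e : rel V) : rel (SV e) := fun a b =>
  match a, b with
  | inl x, inr E => x \in val E
  | inr E, inl x => x \in val E
  | _, _ => false
  end.
End Graphs.

Definition sprod (V U : finType) (g : rel V) (h : rel U) : rel (SV g * U) :=
  fun p q =>
    [&& p.1 == q.1, (if p.1 is inl _ then true else false) & h p.2 q.2]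
    || ((p.2 == q.2) && sadj p.1 q.1).
Arguments sprod {V U} g h.
Arguments sadj {V} e.

(* Main.v *)
Require Import Defs.
From mathcomp Require Import all_boot.
Set Implicit Arguments. Unset Strict Implicit.
Lemma rank_eulerian (T : finType) (rk : T -> nat) (D S : {set T * T}) :
  (forall a, a \in D -> rk a.1 < rk a.2) -> eulerian_sub D S -> S = set0.
Proof.
move=> Hrk /andP [SD Hdeg]; apply/eqP; apply/negPn/negP => /set0Pn [a0 a0S].
case: (@arg_maxnP _ a0 (mem S) (fun a => rk a.2) a0S) => a aS amax.
have : 0 < #|[set b in S | b.2 == a.2]| by apply/card_gt0P; exists a; rewrite inE eqxx andbT.
rewrite -(eqP (forallP Hdeg a.2)) => /card_gt0P [b]; rewrite inE => /andP [bS /eqP b1].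
have le := amax b bS; have := Hrk b (subsetP SD b bS); rewrite b1 => lt.
by have := leq_trans lt le; rewrite ltnn.
Qed.

Lemma rank_AT (T : finType) (rk : T -> nat) (D : {set T * T}) :
  (forall a, a \in D -> rk a.1 < rk a.2) -> n_even_eulerian D != n_odd_eulerian D.
Proof.
move=> Hrk.
have -> : n_odd_eulerian D = 0.
  apply/eqP; rewrite cards_eq0; apply/eqP/setP => S; rewrite !inE.
  apply/negbTE/negP => /andP [/(rank_eulerian Hrk) -> ]; by rewrite cards0.
rewrite -lt0n; apply/card_gt0P; exists set0; rewrite inE cards0 /= andbT.
rewrite /eulerian_sub sub0set /=; apply/forallP => v.
by apply/eqP; rewrite !(eq_card0 (A := [set a in set0 | _])) // => a; rewrite !inE.
Qed.
Lemma count_idx (T : eqType) (a : pred T) (s : seq T) i :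
  uniq s -> count (fun w => a w && (i < index w s)) s = count a (drop i.+1 s).
Proof.
elim: s i => [|x s IH] i //= /andP [xs us].
rewrite eqxx ltn0 andbF add0n.
have -> : count (fun w => a w && (i < (if x == w then 0 else (index w s).+1))) s =
          count (fun w => a w && (i < (index w s).+1)) s.
  apply: eq_in_count => w ws /=.
  by case: eqP => // E; rewrite E ws in xs.
case: i => [|i].
  by rewrite drop0; apply: eq_count => w /=; rewrite andbT.
by rewrite -IH.
Qed.

Lemma find_iota_le (p : pred nat) n k : p k -> find p (iota 0 n) <= k.
Proof.
move=> pk; case: (ltnP k n) => kn.
  rewrite leqNgt; apply/negP => H.
  by have := before_find 0 H; rewrite nth_iota // add0n pk.
by apply: leq_trans (find_size _ _) _; rewrite size_iota.
Qed.
Lemma card_count (T : finType) (s : seq T) (P : pred T) :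
  perm_eq s (enum T) -> #|[set w | P w]| = count P s.
Proof.
move=> Hs.
have -> : #|[set w | P w]| = #|P| by apply: eq_card => w; rewrite inE.
by rewrite cardE /enum_mem size_filter -enumT (permP Hs).
Qed.

Theorem corollary3p1 (V U : finType) (g : rel V) (h : rel U) (l : nat) :
  0 < l -> simple_graph g -> simple_graph h -> degenerate h l ->
  AT (sprod g h) <= (if l <= 2 then 3 else l.+1).
Proof.
move=> l0 _ /andP [/forallP hirr /forallP hsym] [s [Hs Hdeg]].
have us : uniq s by rewrite (perm_uniq Hs) enum_uniq.
have ins : forall u, u \in s by move=> u; rewrite (perm_mem Hs) mem_enum.
pose rk := fun p : SV g * U => if p.1 is inl _ then (index p.2 s).+1 else 0.
pose D := [set a : (SV g * U) * (SV g * U) | sprod g h a.1 a.2 && (rk a.1 < rk a.2)].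
have HD : forall a, a \in D -> rk a.1 < rk a.2 by move=> a; rewrite inE => /andP [].
have hs : forall u w, h u w = h w u by move=> u w; apply/eqP; exact: (forallP (hsym u) w).
have ssym : forall p q, sprod g h p q = sprod g h q p.
  move=> [a u] [b w]; rewrite /sprod /=.
  case: a => [x|E]; case: b => [y|F] /=; rewrite ?andbF ?orbF ?(eq_sym w u) //.
  by rewrite hs; congr (_ && _); apply: eq_sym.
have rkne : forall p q, sprod g h p q -> rk p != rk q.
  move=> [[x|E] u] [[y|F] w]; rewrite /sprod /rk /= ?andbF ?orbF //.
  move=> /andP [_ huw]; rewrite eqSS; apply/negP => /eqP Ei.
  have := nth_index u (ins u); rewrite Ei nth_index // => uw.
  by rewrite uw (negbTE (hirr u)) in huw.
have orient : is_orientation (sprod g h) D.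
  apply/andP; split; apply/forallP => p; apply/forallP => q; apply/implyP.
    by rewrite inE => /andP [].
  move=> pq; rewrite !inE /= pq -ssym pq /=.
  by have := rkne _ _ pq; case: (ltngtP (rk p) (rk q)).
have od : forall v, outdeg D v <= (if v.1 is inl _ then l else 2).
  move=> [[x|E] u] /=; rewrite /outdeg.
    apply: (@leq_trans #|(fun w => ((inl x : SV g), w)) @: [set w | h u w && (index u s < index w s)]|).
      apply: subset_leq_card; apply/subsetP => [[b w]]; rewrite !inE /sprod /rk /=.
      case: b => [y|F] /=; rewrite ?andbF ?orbF ?ltn0 ?andbF //.
      case/andP => /andP [/eqP [->] huw] lt.
      by apply/imsetP; exists w => //; rewrite inE huw -ltnS.
    apply: leq_trans (leq_imset_card _ _) _.
    rewrite (card_count _ Hs) count_idx //.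
    have := Hdeg u (index u s); rewrite nth_index // index_mem; exact.
  apply: (@leq_trans #|(fun y => ((inl y : SV g), u)) @: val E|).
    apply: subset_leq_card; apply/subsetP => [[b w]]; rewrite !inE /sprod /rk /=.
    case: b => [y|F] /=; rewrite ?andbF ?orbF ?ltn0 ?andbF //.
    case/andP => /andP [/eqP <- yE] _.
    by apply/imsetP; exists y.
  apply: leq_trans (leq_imset_card _ _) _.
  have := valP E => /existsP [x /existsP [y /andP [_ /eqP ->]]].
  by rewrite cards2; case: (x != y).
rewrite /AT; apply: find_iota_le.
apply/existsP; exists D; rewrite /AT_orientation orient (rank_AT HD) /=.
apply/forallP => v; apply: leq_ltn_trans (od v) _.
case: v => [[x|E] u] /=; case: ifP => l2 //.
by rewrite ltnS; apply: ltnW; rewrite ltnNge l2.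
Qed.
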